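(* Let $q$ be a prime power with $q\equiv 3\pmod 4$ and $q>7$, and let $BP(q)$ be the bi-Paley graph. Then any two distinct vertices of the same colour are determined by their $\tfrac14(q-3)$ common neighbours: if $u,v$ and $u',v'$ are two pairs of distinct vertices of the same colour with the same set of common neighbours, then $\{u,v\}=\{u',v'\}$. Equivalently, there are no three distinct vertices of the same colour all adjacent to the common neighbours of two of them.
   Context: Let $\mathbb{F}$ be the field with $q$ elements. The bi-Paley graph $BP(q)$ is the bipartite graph on two copies $\mathbb{F}_\bullet$ and $\mathbb{F}_\circ$ of $\mathbb{F}$, in which $x_\bullet$ is adjacent to $y_\circ$ if and only if $y-x$ is a non-zero square in $\mathbb{F}$. Any two distinct vertices of the same colour in $BP(q)$ have exactly $\tfrac14(q-3)$ common neighbours. *)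

(* Defs.v *)
From HB Require Import structures.
From mathcomp Require Import all_boot all_order all_algebra all_field.
Set Implicit Arguments. Unset Strict Implicit. Unset Printing Implicit Defensive.
Import GRing.Theory.
Local Open Scope ring_scope.

(* Vertices of BP(q): a pair (c, x) with c : bool the colour
   (true = black copy F_bullet, false = white copy F_circ) and x : F. *)
Definition bp_vertex (F : finFieldType) := (bool * F)%type.

Definition nzsq (F : finFieldType) (z : F) : bool :=
  (z != 0) && [exists w : F, w ^+ 2 == z].

Definition bp_adj (F : finFieldType) (a b : bp_vertex F) : bool :=
  (a.1 && ~~ b.1 && nzsq (b.2 - a.2)) || (b.1 && ~~ a.1 && nzsq (a.2 - b.2)).

Definition bp_common (F : finFieldType) (u v : bp_vertex F) : {set bp_vertex F} :=
  [set w | bp_adj u w && bp_adj v w].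

(* Main.v *)
Require Import Defs.
From HB Require Import structures.
From mathcomp Require Import all_boot all_order all_algebra all_field.
From mathcomp Require Import zify ring lra.
Set Implicit Arguments. Unset Strict Implicit. Unset Printing Implicit Defensive.
Import GRing.Theory Num.Theory.
Local Open Scope ring_scope.

Lemma card_natr (F : finFieldType) : (#|F|%:R : F) = 0.
Proof.
have h : \sum_(x : F) (x + 1) = \sum_(x : F) x.
  by rewrite [RHS](reindex_inj (addIr (1 : F))).
move: h; rewrite big_split /= sumr_const => h.
by apply: (addrI (\sum_(x : F) x)); rewrite addr0 -[RHS]h.
Qed.

Lemma two_nz (F : finFieldType) (q : nat) : #|F| = q -> (q %% 4 = 3)%N ->
  (2%:R : F) != 0.
Proof.
move=> hq h4; apply/eqP => h2.
have := card_natr F; rewrite hq (divn_eq q 4) h4.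
have -> : (q %/ 4 * 4 + 3 = (2 * (q %/ 4 * 2 + 1)) + 1)%N by lia.
by rewrite natrD natrM h2 mul0r add0r => /eqP; rewrite oner_eq0.
Qed.

Lemma fiber (F : finFieldType) (z : F) : (2%:R : F) != 0 ->
  #|[set y : F | y ^+ 2 == z]| = if z == 0 then 1%N else if nzsq z then 2%N else 0%N.
Proof.
move=> h2.
have [->|z0] := eqVneq z 0.
  rewrite -[RHS](cards1 (0 : F)); apply: eq_card => y; rewrite !inE sqrf_eq0 //.
case hz: (nzsq z).
  move: hz; rewrite /nzsq z0 /= => /existsP [y0 /eqP hy0].
  have y00 : y0 != 0 by apply: contraNneq z0 => e; rewrite -hy0 e expr0n.
  have : y0 != - y0.
    apply: contraNneq y00 => e.
    have : 2%:R * y0 = 0 by rewrite mulr2n mulrDl mul1r {1}e addNr.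
    by move/eqP; rewrite mulf_eq0 (negbTE h2) /= => /eqP ->.
  move=> ne; transitivity #|[set y0; -y0]|; last by rewrite cards2 ne.
  apply: eq_card => y.
  by rewrite !inE -hy0 eqf_sqr.
apply/eqP; rewrite cards_eq0; apply/eqP/setP => y; rewrite !inE.
apply/negP => /eqP hy.
by move: hz; rewrite /nzsq z0 /= => /negbT/existsPn/(_ y); rewrite hy eqxx.
Qed.

Lemma card_sq (F : finFieldType) : (2%:R : F) != 0 ->
  #|F| = (#|[set x : F | nzsq x]|.*2).+1.
Proof.
move=> h2.
have e1 : #|F| = (\sum_(y : F) 1)%N by rewrite sum1_card.
rewrite e1 (partition_big (fun y : F => y ^+ 2) predT) //=.
rewrite (eq_bigr (fun z => if z == 0 then 1%N else if nzsq z then 2%N else 0%N)); last first.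
  by move=> z _; rewrite sum1dep_card fiber.
rewrite (bigD1 0) //= eqxx.
rewrite (eq_bigr (fun z => if nzsq z then 2%N else 0%N)); last first.
  by move=> z /negbTE ->.
rewrite -big_mkcondr /= (eq_bigr (fun _ => 1 + 1)%N) // big_split /= sum1dep_card.
have -> : #|[set i : F | (i != 0) && nzsq i]| = #|[set x : F | nzsq x]|.
  apply: eq_card => x; rewrite !inE.
  by case h: (nzsq x); rewrite ?andbF ?andbT //; move: h; rewrite /nzsq => /andP [].
by rewrite addnn add1n.
Qed.

Definition msq (F : finFieldType) := #|[set x : F | nzsq x]|.

Lemma unit_pow (F : finFieldType) (x : F) : x != 0 -> x ^+ (#|F|.-1) = 1.
Proof.
move=> x0; apply: (mulfI x0); rewrite mulr1 -exprS prednK ?expf_card //.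
by apply/card_gt0P; exists 0.
Qed.

Lemma nzsq_pow (F : finFieldType) (x : F) : (2%:R : F) != 0 -> nzsq x -> x ^+ msq F = 1.
Proof.
move=> h2 /andP [x0 /existsP [y /eqP hy]].
have y0 : y != 0 by apply: contraNneq x0 => e; rewrite -hy e expr0n.
rewrite -hy -exprM mul2n -[(msq F).*2]/((msq F).*2.+1.-1) -card_sq //.
exact: unit_pow.
Qed.

Lemma msq_gt0 (F : finFieldType) : (0 < msq F)%N.
Proof.
apply/card_gt0P; exists 1; rewrite inE /nzsq oner_neq0 /=.
by apply/existsP; exists 1; rewrite expr1n.
Qed.

Lemma euler (F : finFieldType) (x : F) : (2%:R : F) != 0 ->
  nzsq x = (x ^+ msq F == 1).
Proof.
move=> h2.
set R := [set x : F | x ^+ msq F == 1].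
have sub : [set x : F | nzsq x] \subset R.
  by apply/subsetP => y; rewrite !inE => /(nzsq_pow h2) ->.
have le : (#|R| <= msq F)%N.
  have p0 : ('X^(msq F) - 1%:P : {poly F}) != 0.
    by rewrite -size_poly_eq0 size_XnsubC ?msq_gt0.
  have := max_poly_roots p0 (rs := enum R).
  rewrite size_XnsubC ?msq_gt0 // ltnS -cardE; apply; last exact: enum_uniq.
  apply/allP => y; rewrite mem_enum inE rootE !hornerE subr_eq0 //.
have eq : #|[set x : F | nzsq x]| = #|R|.
  by apply/eqP; rewrite eqn_leq subset_leq_card //= le.
move/subset_cardP: sub => /(_ eq) /(_ x); rewrite !inE => ->.
by [].
Qed.

Definition chi (F : finFieldType) (x : F) : int :=
  if x == 0 then 0 else if nzsq x then 1 else -1.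

Lemma chi_range (F : finFieldType) (x : F) :
  [|| chi x == -1, chi x == 0 | chi x == 1].
Proof. by rewrite /chi; case: (x == 0); case: (nzsq x). Qed.

Lemma chi_pow (F : finFieldType) (x : F) : (2%:R : F) != 0 ->
  (chi x)%:~R = x ^+ msq F.
Proof.
move=> h2; rewrite /chi.
have [->|x0] := eqVneq x 0; first by rewrite expr0n gtn_eqF ?msq_gt0.
rewrite (euler x h2).
case: eqP => [->//|ne].
have : (x ^+ msq F) ^+ 2 == 1.
  rewrite -exprM mulnC mul2n -[((msq F)).*2]/((msq F).*2.+1.-1) -card_sq //.
  by rewrite unit_pow.
by rewrite sqrf_eq1 => /orP [/eqP //|/eqP ->].
Qed.

Lemma int3_inj (F : finFieldType) (i j : int) : (2%:R : F) != 0 ->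
  [|| i == -1, i == 0 | i == 1] -> [|| j == -1, j == 0 | j == 1] ->
  (i%:~R : F) = j%:~R -> i = j.
Proof.
move=> h2 hi hj e.
have h1 : (1 : F) != -1.
  apply: contra h2 => /eqP e1; apply/eqP.
  by rewrite mulr2n {2}e1 subrr.
have h1' : (1 : F) != 0 := oner_neq0 F.
move: hi hj e => /or3P [] /eqP -> /or3P [] /eqP -> //=; rewrite ?rmorphN ?rmorph1 ?rmorph0 /=;
  move=> /eqP; rewrite ?oppr_eq0 ?(eq_sym 0) ?oppr_eq0 ?(negbTE h1') //.
- by rewrite eq_sym (negbTE h1).
- by rewrite (negbTE h1).
Qed.

Lemma chiM (F : finFieldType) (x y : F) : (2%:R : F) != 0 ->
  chi (x * y) = chi x * chi y.
Proof.
move=> h2; apply: (int3_inj h2); first exact: chi_range.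
  by move: (chi_range x) (chi_range y) => /or3P [] /eqP -> /or3P [] /eqP ->.
by rewrite rmorphM /= !chi_pow // exprMn.
Qed.

Lemma chiN1 (F : finFieldType) (q : nat) : #|F| = q -> (q %% 4 = 3)%N ->
  chi (-1 : F) = -1.
Proof.
move=> hq h4; have h2 := two_nz hq h4.
have hm : odd (msq F).
  have := card_sq h2; rewrite -/(msq F) hq => e.
  move: h4; rewrite e -muln2; move: (msq F) => k hk.
  case/boolP: (odd k) => // ev; have := odd_double_half k.
  rewrite (negbTE ev) add0n -muln2 => ek; lia.
apply: (int3_inj h2); rewrite ?eqxx ?orbT //; first exact: chi_range.
by rewrite chi_pow // -signr_odd hm /= rmorphN rmorph1.
Qed.

Lemma chiN (F : finFieldType) (q : nat) (x : F) : #|F| = q -> (q %% 4 = 3)%N ->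
  chi (- x) = - chi x.
Proof.
move=> hq h4; have h2 := two_nz hq h4.
by rewrite -mulN1r chiM // (chiN1 hq h4) mulN1r.
Qed.

Lemma chi0 (F : finFieldType) (x : F) : (chi x == 0) = (x == 0).
Proof. by rewrite /chi; case: (x == 0); case: (nzsq x). Qed.

Lemma chi1 (F : finFieldType) (x : F) : (chi x == 1) = nzsq x.
Proof.
rewrite /chi; have [->|x0] := eqVneq x 0; first by rewrite /nzsq eqxx.
by case: (nzsq x).
Qed.

Lemma chi_sqr (F : finFieldType) (x : F) : chi x ^+ 2 = (x != 0)%:R.
Proof. by rewrite /chi; case: (x == 0); case: (nzsq x). Qed.

Lemma chi_sum0 (F : finFieldType) (q : nat) : #|F| = q -> (q %% 4 = 3)%N ->
  \sum_(x : F) chi x = 0.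
Proof.
move=> hq h4.
have e : \sum_(x : F) chi x = \sum_(x : F) chi (- x).
  by rewrite [RHS](reindex_inj (@oppr_inj F)) /=; apply: eq_bigr => x _; rewrite opprK.
have : \sum_(x : F) chi x = - \sum_(x : F) chi x.
  by rewrite {1}e -sumrN; apply: eq_bigr => x _; rewrite (chiN _ hq h4).
move/eqP; rewrite -addr_eq0 -mulr2n => /eqP h.
by apply/eqP; move/eqP: h; rewrite mulrn_eq0.
Qed.

Lemma chi_one (F : finFieldType) : chi (1 : F) = 1.
Proof.
apply/eqP; rewrite chi1 /nzsq oner_neq0 /=.
by apply/existsP; exists 1; rewrite expr1n.
Qed.

Lemma jac0 (F : finFieldType) (q : nat) (d : F) : #|F| = q -> (q %% 4 = 3)%N ->
  d != 0 -> \sum_(u : F) chi u * chi (u - d) = -1.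
Proof.
move=> hq h4 d0; have h2 := two_nz hq h4.
have e : forall u : F, chi u * chi (u - d) = chi (1 - d / u) - (u == 0)%:R.
  move=> u; have [->|u0] := eqVneq u 0.
    by rewrite invr0 mulr0 subr0 chi_one {1}/chi eqxx mul0r subrr.
  rewrite /= mulr0n subr0 -chiM //.
  have -> : u * (u - d) = u ^+ 2 * (1 - d / u).
    by field.
  by rewrite chiM // chiM // -expr2 chi_sqr u0 mul1r.
rewrite (eq_bigr _ (fun u _ => e u)) sumrB.
have inj : injective (fun u : F => 1 - d / u).
  move=> u v /= /eqP; rewrite (can_eq (addKr 1)) eqr_opp => /eqP /(mulfI d0).
  exact: invr_inj.
have -> : \sum_(u : F) chi (1 - d / u) = \sum_(t : F) chi t by rewrite [RHS](reindex_inj inj).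
rewrite (chi_sum0 hq h4).
rewrite (bigD1 0) //= eqxx big1 ?addr0 ?sub0r //.
by move=> u /negbTE ->.
Qed.

Lemma chi_sum_shift (F : finFieldType) (q : nat) (a : F) : #|F| = q -> (q %% 4 = 3)%N ->
  \sum_(w : F) chi (w - a) = 0.
Proof.
move=> hq h4.
rewrite (reindex_inj (addIr a)) /=.
rewrite (eq_bigr (fun w => chi w)) ?(chi_sum0 hq h4) //.
by move=> w _; rewrite addrK.
Qed.

Lemma jac (F : finFieldType) (q : nat) (a b : F) : #|F| = q -> (q %% 4 = 3)%N ->
  a != b -> \sum_(w : F) chi (w - a) * chi (w - b) = -1.
Proof.
move=> hq h4 ab.
rewrite (reindex_inj (addIr a)) /=.
rewrite -(jac0 (d := b - a) hq h4); last by rewrite subr_eq0 eq_sym.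
apply: eq_bigr => w _ /=.
have e1 : w + a - a = w by ring.
have e2 : w + a - b = w - (b - a) by ring.
by rewrite e1 e2.
Qed.

Lemma sum_ind (F : finFieldType) (a : F) : \sum_(x : F) ((x == a)%:R : int) = 1.
Proof.
rewrite (bigD1 a) //= eqxx big1 ?addr0 // => x /negbTE ->; done.
Qed.

Lemma pair_sum (F : finFieldType) (q : nat) (w w' : F) : #|F| = q -> (q %% 4 = 3)%N ->
  \sum_(c : F) chi (w - c) * chi (w' - c) = q%:R * (w == w')%:R - 1.
Proof.
move=> hq h4.
have e : forall c : F, chi (w - c) * chi (w' - c) = chi (c - w) * chi (c - w').
  move=> c; rewrite -(opprB c w) -(opprB c w') !(chiN _ hq h4); ring.
rewrite (eq_bigr _ (fun c _ => e c)).
have [<-|ne] := eqVneq w w'; last by rewrite (jac hq h4 ne) mulr0 sub0r.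
rewrite mulr1.
rewrite (eq_bigr (fun c => 1 - (c == w)%:R)); last first.
  move=> c _; rewrite -expr2 chi_sqr subr_eq0.
  by case: (c == w).
by rewrite sumrB sum_ind sumr_const hq.
Qed.

Lemma sumsq (F : finFieldType) (q : nat) (G : F -> int) : #|F| = q -> (q %% 4 = 3)%N ->
  \sum_(c : F) (\sum_(w : F) G w * chi (w - c)) ^+ 2
  = q%:R * \sum_(w : F) G w ^+ 2 - (\sum_(w : F) G w) ^+ 2.
Proof.
move=> hq h4.
have e1 : forall c : F, (\sum_(w : F) G w * chi (w - c)) ^+ 2 =
   \sum_(w : F) \sum_(w' : F) G w * G w' * (chi (w - c) * chi (w' - c)).
  move=> c; rewrite expr2 mulr_suml; apply: eq_bigr => w _.
  rewrite mulr_sumr; apply: eq_bigr => w' _; ring.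
rewrite (eq_bigr _ (fun c _ => e1 c)).
rewrite exchange_big /=.
rewrite (eq_bigr (fun w => \sum_(w' : F) G w * G w' * (q%:R * (w == w')%:R - 1))); last first.
  move=> w _; rewrite exchange_big /=; apply: eq_bigr => w' _.
  by rewrite -mulr_sumr (pair_sum _ _ hq h4).
have e2 : forall w : F, \sum_(w' : F) G w * G w' * (q%:R * (w == w')%:R - 1)
   = q%:R * G w ^+ 2 - G w * \sum_(w' : F) G w'.
  move=> w; rewrite (bigD1 w) //= eqxx mulr1.
  rewrite (eq_bigr (fun w' => - (G w * G w'))); last first.
    by move=> w' /negbTE; rewrite eq_sym => ->; rewrite mulr0 sub0r mulrN1.
  rewrite sumrN mulr_sumr [in RHS](bigD1 w) //=; ring.
rewrite (eq_bigr _ (fun w _ => e2 w)) sumrB -mulr_sumr; congr (_ - _).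
by rewrite expr2 mulr_suml.
Qed.

Lemma keyK (F : finFieldType) (q : nat) (a b c : F) : #|F| = q -> (q %% 4 = 3)%N ->
  (7 < q)%N -> a != b -> c != a -> c != b ->
  (forall w, nzsq (w - a) -> nzsq (w - b) -> nzsq (w - c)) -> False.
Proof.
move=> hq h4 h7 ab ca cb H.
have h2 := two_nz hq h4.
pose T (c : F) := \sum_(w : F) chi (w - a) * chi (w - b) * chi (w - c).
pose E (w : F) := (1 + chi (w - a)) * (1 + chi (w - b)) * (1 - chi (w - c)).
have E0 : forall w, w != a -> w != b -> E w = 0.
  move=> w wa wb; rewrite /E.
  have xa : chi (w - a) != 0 by rewrite chi0 subr_eq0.
  have xb : chi (w - b) != 0 by rewrite chi0 subr_eq0.
  move: (chi_range (w - a)) (chi_range (w - b)) xa xb.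
  move=> /or3P [] /eqP ea /or3P [] /eqP eb; rewrite ?ea ?eb //= => _ _;
    rewrite ?addNr ?mul0r ?mulr0 //.
  have : nzsq (w - c) by apply: H; rewrite -chi1; apply/eqP.
  by rewrite -chi1 => /eqP ->; rewrite subrr mulr0.
have sumE : \sum_(w : F) E w = E a + E b.
  rewrite (bigD1 a) //= (bigD1 b) 1?eq_sym //= big1 ?addr0 // => w /andP [wb wa].
  exact: E0.
have Ebound : E a + E b <= 4.
  have c0 : chi (0 : F) = 0 by rewrite /chi eqxx.
  rewrite /E !subrr c0 -(opprB b a) (chiN _ hq h4).
  by move: (chi_range (b - a)) (chi_range (a - c)) (chi_range (b - c)) =>
    /or3P [] /eqP -> /or3P [] /eqP -> /or3P [] /eqP ->.
have expE : \sum_(w : F) E w = q%:R + 1 - T c.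
  have : \sum_(w : F) E w = \sum_(w : F) 1 + \sum_(w : F) chi (w - a) + \sum_(w : F) chi (w - b)
     - \sum_(w : F) chi (w - c) + \sum_(w : F) chi (w - a) * chi (w - b)
     - \sum_(w : F) chi (w - a) * chi (w - c) - \sum_(w : F) chi (w - b) * chi (w - c) - T c.
    rewrite /T (eq_bigr (fun w => 1 + chi (w - a) + chi (w - b) - chi (w - c)
       + chi (w - a) * chi (w - b) - chi (w - a) * chi (w - c) - chi (w - b) * chi (w - c)
       - chi (w - a) * chi (w - b) * chi (w - c))); last by move=> w _; rewrite /E; ring.
    by rewrite !big_split !sumrN.
  move=> ->; rewrite sumr_const hq !(chi_sum_shift _ hq h4) !(jac hq h4) //;
    rewrite ?(eq_sym c) //; first ring.
  1,2: by rewrite eq_sym.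
have Tlow : (q%:R - 3 <= T c).
  have := Ebound; rewrite -sumE expE; lra.
have Tsym : T (a + b - c) = - T c.
  rewrite /T (reindex_inj (addrI (a + b)) ) /=.
  rewrite [in RHS](reindex_inj oppr_inj) /= -sumrN.
  apply: eq_bigr => w _.
  have e1 : a + b + w - a = - (- w - b) by ring.
  have e2 : a + b + w - b = - (- w - a) by ring.
  have e3 : a + b + w - (a + b - c) = - (- w - c) by ring.
  rewrite e1 e2 e3 !(chiN _ hq h4); ring.
have [ecs|necs] := eqVneq (a + b - c) c.
  move: Tsym; rewrite ecs; move: Tlow; move: (T c) => t; lia.
have G2 : \sum_(w : F) (chi (w - a) * chi (w - b)) ^+ 2 = q%:R - 2.
  rewrite (eq_bigr (fun w => 1 - (w == a)%:R - (w == b)%:R)).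
    by rewrite !sumrB sum_ind sum_ind sumr_const hq; ring.
  move=> w _; rewrite exprMn !chi_sqr !subr_eq0.
  have [->|wa] := eqVneq w a; first by rewrite (negbTE ab) /=; ring.
  by case: (w == b) => /=; ring.
have S := sumsq (fun w => chi (w - a) * chi (w - b)) hq h4.
rewrite G2 (jac hq h4 ab) in S.
have ge : T c ^+ 2 + T (a + b - c) ^+ 2 <= \sum_(c' : F) T c' ^+ 2.
  rewrite (bigD1 c) //= (bigD1 (a + b - c)) //= addrA lerDl.
  by apply: sumr_ge0 => i _; apply: sqr_ge0.
have ST : \sum_(c' : F) T c' ^+ 2 = q%:R * (q%:R - 2) - (-1) ^+ 2 by exact: S.
move: ge; rewrite Tsym ST => ge.
have q8 : (8 <= q)%N by [].
move: Tlow ge q8; move: (T c) => t; rewrite !expr2; nia.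
Qed.

Definition nb (F : finFieldType) (col : bool) (a w : F) : bool :=
  if col then nzsq (w - a) else nzsq (a - w).

Lemma adjE (F : finFieldType) (col col' : bool) (a w : F) :
  bp_adj (col, a) (col', w) = (col' == ~~ col) && nb col a w.
Proof. by rewrite /bp_adj /nb; case: col; case: col'; rewrite /= ?orbF. Qed.

Lemma keyK' (F : finFieldType) (q : nat) (col : bool) (a b c : F) : #|F| = q ->
  (q %% 4 = 3)%N -> (7 < q)%N -> a != b -> c != a -> c != b ->
  (forall w, nb col a w -> nb col b w -> nb col c w) -> False.
Proof.
move=> hq h4 h7 ab ca cb H; case: col H => H.
  exact: (keyK hq h4 h7 ab ca cb H).
apply: (keyK (a := - a) (b := - b) (c := - c) hq h4 h7).
- by rewrite eqr_opp.
- by rewrite eqr_opp.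
- by rewrite eqr_opp.
move=> w; have e : forall x : F, w - - x = x - - w by move=> x; ring.
rewrite !e; exact: H.
Qed.

Lemma exists_other (F : finFieldType) (q : nat) (a b : F) : #|F| = q -> (7 < q)%N ->
  exists c : F, (c != a) && (c != b).
Proof.
move=> hq h7.
have := cardsC [set a; b]; rewrite hq => e.
have : (#|[set a; b]| <= 2)%N by rewrite cards2; case: (a != b).
move=> le.
have : (0 < #|~: [set a; b]|)%N by lia.
by case/card_gt0P => c; rewrite !inE negb_or => h; exists c.
Qed.

Local Close Scope ring_scope.

Theorem mainTheorem10 (F : finFieldType) (q : nat) (hq : #|F| = q)
  (hq4 : q %% 4 = 3) (hq7 : 7 < q)
  (u v u' v' : bp_vertex F) :
  u != v -> u.1 = v.1 -> u' != v' -> u'.1 = v'.1 ->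
  bp_common u v = bp_common u' v' ->
  [set u; v] = [set u'; v'].
Proof.
case: u v u' v' => [cu a] [cv b] [cu' a'] [cv' b'] /= nuv ecv nuv' ecv'.
subst cv cv'.
have ab : a != b by apply: contra nuv => /eqP ->.
have ab' : a' != b' by apply: contra nuv' => /eqP ->.
move=> /setP hc.
have hcw : forall w, nb cu a w -> nb cu b w -> nb cu' a' w && nb cu' b' w
                       && (~~ cu == ~~ cu').
  move=> w h1 h2; move: (hc (~~ cu, w)); rewrite !inE !adjE h1 h2 eqxx /=.
  move/esym => /andP [/andP [/eqP e1 n1] /andP [_ n2]].
  by rewrite n1 n2 e1 eqxx.
have [w0 /andP [w1 w2]] : exists w, nb cu a w && nb cu b w.
  case: (boolP [exists w, nb cu a w && nb cu b w]) => [/existsP //|/existsPn hn].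
  exfalso.
  have [c /andP [ca cb]] := exists_other a b hq hq7.
  apply: (keyK' hq hq4 hq7 ab ca cb (col := cu)) => w h1 h2.
  by move: (hn w); rewrite h1 h2.
have ecu : cu' = cu.
  by move: (hcw w0 w1 w2) => /andP [_ /eqP /(congr1 negb)]; rewrite !negbK => ->.
subst cu'.
have inab : forall c, c \in [:: a'; b'] -> (c == a) || (c == b).
  move=> c hcin; apply/negPn/negP; rewrite negb_or => /andP [ca cb].
  apply: (keyK' hq hq4 hq7 ab ca cb (col := cu)) => w h1 h2.
  move: (hcw w h1 h2) => /andP [/andP [n1 n2] _].
  by move: hcin; rewrite !inE => /orP [] /eqP ->.
move: (inab a'); rewrite !inE eqxx => /(_ isT) /orP [] /eqP ea;
move: (inab b'); rewrite !inE eqxx orbT => /(_ isT) /orP [] /eqP eb; subst.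
- by rewrite eqxx in ab'.
- by [].
- by rewrite setUC.
- by rewrite eqxx in ab'.
Qed.
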